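(* Let $v$ satisfy the standing assumptions and the doubling condition with constant $D$, and $g(x)=v(1-x^{-1})$. For an integer $n\ge1$ let $c_n=\int_{1/2}^1\frac{r^n\,dv(r)}{v(r)^2}$ (Riemann–Stieltjes integral). Then there exist constants $C$ and $n_0$, depending only on $D$, such that $c_n\le \dfrac{C}{g(n)}$ for all $n\ge n_0$.
   Context: Standing assumptions: $v:[0,1)\to[1,\infty)$ is positive, increasing, continuous, $v(0)=1$, $\lim_{r\to1}v(r)=+\infty$. Doubling condition: $v(1-d)\le D\,v(1-2d)$ for all $d\in(0,1/2]$, with $D\ge1$. *)

(* Defs.v *)
From Stdlib Require Import Reals Lra.
Open Scope R_scope.

Fixpoint RS_sum (f g : R -> R) (x t : nat -> R) (k : nat) : R :=
  match k with
  | O => 0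
  | S k' => RS_sum f g x t k' + f (t k') * (g (x (S k')) - g (x k'))
  end.

Definition RS_integral (f g : R -> R) (a b I : R) : Prop :=
  forall eps, 0 < eps -> exists delta, 0 < delta /\
    forall (x t : nat -> R) (k : nat),
      x O = a -> x k = b ->
      (forall i, (i < k)%nat ->
         x i < x (S i) /\ x (S i) - x i < delta /\ x i <= t i <= x (S i)) ->
      Rabs (RS_sum f g x t k - I) < eps.

Definition RS_improper (f g : R -> R) (a b L : R) : Prop :=
  (forall c, a < c < b -> exists I, RS_integral f g a c I) /\
  (forall eps, 0 < eps -> exists eta, 0 < eta /\
     forall c I, b - eta < c < b -> RS_integral f g a c I -> Rabs (I - L) < eps).

Definition standing (v : R -> R) : Prop :=
  (forall r, 0 <= r < 1 -> 1 <= v r) /\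
  (forall r s, 0 <= r -> r < s -> s < 1 -> v r < v s) /\
  (forall r, 0 <= r < 1 -> forall eps, 0 < eps -> exists delta, 0 < delta /\
     forall s, 0 <= s < 1 -> Rabs (s - r) < delta -> Rabs (v s - v r) < eps) /\
  v 0 = 1 /\
  (forall M, exists r0, 0 <= r0 < 1 /\ forall r, r0 <= r < 1 -> M < v r).

Definition doubling (v : R -> R) (D : R) : Prop :=
  forall d, 0 < d <= 1/2 -> v (1 - d) <= D * v (1 - 2 * d).

Definition gfun (v : R -> R) (x : R) : R := v (1 - / x).

Definition cn_integrand (v : R -> R) (n : nat) (r : R) : R := r ^ n / (v r) ^ 2.

(* Main.v *)
Require Import Defs.
From Stdlib Require Import Reals Lra Lia.
Open Scope R_scope.

Lemma exp_pow_n (a : R) (n : nat) : exp a ^ n = exp (a * INR n).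
Proof.
  induction n as [|n IH].
  - simpl. rewrite Rmult_0_r, exp_0. reflexivity.
  - rewrite S_INR. simpl pow. rewrite IH. rewrite <- exp_plus. f_equal. ring.
Qed.

Lemma pow_le_one (x : R) (n : nat) : 0 <= x <= 1 -> x ^ n <= 1.
Proof.
  intros H. rewrite <- (pow1 n). apply pow_incr. lra.
Qed.

Lemma INR_le_pow2 (n : nat) : INR n <= 2 ^ n.
Proof.
  induction n as [|n IH].
  - simpl. lra.
  - rewrite S_INR. simpl pow.
    assert (1 <= 2 ^ n) by (apply pow_R1_Rle; lra). lra.
Qed.

Lemma exp_lower (X : R) (m : nat) : 0 <= X -> (0 < m)%nat -> (X / INR m) ^ m <= exp X.
Proof.
  intros HX Hm.
  assert (Hm' : 0 < INR m) by (apply lt_0_INR; lia).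
  replace (exp X) with (exp (X / INR m) ^ m).
  2:{ rewrite exp_pow_n. f_equal. field. lra. }
  apply pow_incr. split.
  - apply Rmult_le_pos; [lra|]. left; apply Rinv_0_lt_compat; lra.
  - pose proof (exp_ineq1_le (X / INR m)). lra.
Qed.

Definition hh (v : R -> R) (x : R) : R := / v x.
Definition ak (n k : nat) : R := Rmax (1/2) (1 - 2 ^ k / INR n).
Definition clamp (lo hi x : R) : R := Rmin (Rmax x lo) hi.

Fixpoint Phi (v : R -> R) (n K : nat) (x : R) : R :=
  match K with
  | O => hh v (Rmax x (ak n 0))
  | S K' => Phi v n K' x + (ak n K') ^ n * (hh v (clamp (ak n (S K')) (ak n K') x) - hh v (ak n K'))
  end.

Lemma ak_range n k : (1 <= n)%nat -> 1/2 <= ak n k < 1.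
Proof.
  intros Hn. unfold ak. assert (0 < INR n) by (apply lt_0_INR; lia).
  assert (0 < 2 ^ k / INR n) by (apply Rdiv_lt_0_compat; [apply pow_lt; lra | lra]).
  unfold Rmax; destruct (Rle_dec (1/2) (1 - 2^k/INR n)); lra.
Qed.

Lemma ak_dec n k : ak n (S k) <= ak n k.
Proof.
  unfold ak. destruct (Nat.eq_dec n 0) as [->|Hn].
  - simpl INR. unfold Rdiv. rewrite Rinv_0. rewrite !Rmult_0_r. lra.
  - assert (0 < INR n) by (apply lt_0_INR; lia).
    assert (2 ^ k / INR n <= 2 ^ S k / INR n).
    { apply Rmult_le_compat_r. left; apply Rinv_0_lt_compat; lra.
      simpl. assert (0 < 2^k) by (apply pow_lt; lra). lra. }
    unfold Rmax; destruct (Rle_dec (1/2) (1 - 2^k/INR n));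
      destruct (Rle_dec (1/2) (1 - 2^S k/INR n)); lra.
Qed.

Lemma hh_dec v : standing v -> forall x y, 0 <= x <= y -> y < 1 -> hh v y <= hh v x.
Proof.
  intros [H1 [H2 _]] x y Hxy Hy. unfold hh.
  assert (1 <= v x) by (apply H1; lra).
  destruct (Req_dec x y) as [->|Hne]. lra.
  assert (v x < v y) by (apply H2; lra).
  apply Rinv_le_contravar; lra.
Qed.

Lemma hh_pos v : standing v -> forall x, 0 <= x < 1 -> 0 < hh v x.
Proof.
  intros [H1 _] x Hx. unfold hh. apply Rinv_0_lt_compat. pose proof (H1 x Hx). lra.
Qed.

Lemma clamp_ident v lo hi x :
  lo <= hi ->
  hh v (Rmax x lo) = hh v (Rmax x hi) + hh v (clamp lo hi x) - hh v hi.
Proof.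
  intros H. unfold clamp, Rmax, Rmin.
  destruct (Rle_dec x lo); destruct (Rle_dec x hi); destruct (Rle_dec lo hi);
  try lra; try (destruct (Rle_dec x hi); lra).
Qed.

Lemma Rmax_range x a : 1/2 <= x < 1 -> 1/2 <= a < 1 -> 1/2 <= Rmax x a < 1.
Proof. intros. unfold Rmax; destruct (Rle_dec x a); lra. Qed.

Lemma clamp_range lo hi x : 1/2 <= lo <= hi -> hi < 1 -> lo <= clamp lo hi x <= hi.
Proof. intros. unfold clamp, Rmax, Rmin. destruct (Rle_dec x lo); destruct (Rle_dec _ hi); lra. Qed.

Lemma clamp_mono lo hi x y : lo <= hi -> x <= y -> clamp lo hi x <= clamp lo hi y.
Proof. intros. unfold clamp, Rmax, Rmin.
  destruct (Rle_dec x lo); destruct (Rle_dec y lo); destruct (Rle_dec lo hi);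
  destruct (Rle_dec x hi); destruct (Rle_dec y hi); lra. Qed.

Lemma Phi_claim v n K : standing v -> (1 <= n)%nat ->
  forall x y, 1/2 <= x < y -> y < 1 ->
  x ^ n * (hh v (Rmax x (ak n K)) - hh v (Rmax y (ak n K))) <= Phi v n K x - Phi v n K y.
Proof.
  intros Hs Hn x y Hxy Hy.
  assert (Hx1 : 0 <= x ^ n <= 1) by (split; [apply pow_le; lra | apply pow_le_one; lra]).
  induction K as [|K IH].
  - simpl. pose proof (ak_range n 0 Hn).
    assert (hh v (Rmax y (ak n 0)) <= hh v (Rmax x (ak n 0))).
    { apply hh_dec; auto. pose proof (Rmax_range x (ak n 0)). unfold Rmax in *.
      destruct (Rle_dec x (ak n 0)); destruct (Rle_dec y (ak n 0)); lra.
      pose proof (Rmax_range y (ak n 0)); lra. }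
    nra.
  - simpl Phi. pose proof (ak_range n K Hn). pose proof (ak_range n (S K) Hn).
    pose proof (ak_dec n K).
    rewrite (clamp_ident v (ak n (S K)) (ak n K) x) by lra.
    rewrite (clamp_ident v (ak n (S K)) (ak n K) y) by lra.
    set (cx := clamp (ak n (S K)) (ak n K) x).
    set (cy := clamp (ak n (S K)) (ak n K) y).
    assert (Hc : x ^ n * (hh v cx - hh v cy) <= ak n K ^ n * (hh v cx - hh v cy)).
    { destruct (Rle_dec (ak n K) x).
      - assert (cx = ak n K /\ cy = ak n K) as [-> ->].
        { unfold cx, cy, clamp, Rmax, Rmin.
          destruct (Rle_dec x (ak n (S K))); destruct (Rle_dec y (ak n (S K)));
          destruct (Rle_dec _ (ak n K)); try lra; destruct (Rle_dec _ (ak n K)); lra. }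
        lra.
      - assert (x ^ n <= ak n K ^ n) by (apply pow_incr; lra).
        assert (cx <= cy) by (apply clamp_mono; lra).
        assert (ak n (S K) <= cx <= ak n K) by (apply clamp_range; lra).
        assert (ak n (S K) <= cy <= ak n K) by (apply clamp_range; lra).
        assert (hh v cy <= hh v cx) by (apply hh_dec; auto; lra).
        nra. }
    nra.
Qed.

Lemma Phi_nonneg v n K : standing v -> (1 <= n)%nat -> forall x, 1/2 <= x < 1 -> 0 <= Phi v n K x.
Proof.
  intros Hs Hn x Hx. induction K as [|K IH]; simpl.
  - left. apply hh_pos; auto. pose proof (Rmax_range x (ak n 0) Hx (ak_range n 0 Hn)); lra.
  - pose proof (ak_range n K Hn). pose proof (ak_range n (S K) Hn). pose proof (ak_dec n K).
    pose proof (clamp_range (ak n (S K)) (ak n K) x ltac:(lra) ltac:(lra)).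
    assert (0 <= ak n K ^ n) by (apply pow_le; lra).
    assert (hh v (ak n K) <= hh v (clamp (ak n (S K)) (ak n K) x)) by (apply hh_dec; auto; lra).
    nra.
Qed.

Lemma hh_ak_step v D n k : standing v -> doubling v D -> 1 <= D -> (1 <= n)%nat ->
  hh v (ak n (S k)) <= D * hh v (ak n k).
Proof.
  intros Hs Hd HD Hn. pose proof (ak_range n k Hn) as R1. pose proof (ak_range n (S k) Hn) as R2.
  pose proof (ak_dec n k) as Hdec.
  destruct Hs as [H1 [H2 _]].
  assert (v1 : 1 <= v (ak n k)) by (apply H1; lra).
  assert (v2 : 1 <= v (ak n (S k))) by (apply H1; lra).
  assert (Hv : v (ak n k) <= D * v (ak n (S k))).
  { assert (0 < INR n) by (apply lt_0_INR; lia).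
    set (t := 2 ^ k / INR n).
    assert (Ht : 0 < t) by (apply Rdiv_lt_0_compat; [apply pow_lt; lra | lra]).
    assert (E1 : 2 ^ S k / INR n = 2 * t) by (unfold t; simpl; field; lra).
    destruct (Rle_dec (1/2) (1 - t)) as [Hc|Hc].
    - assert (Ek : ak n k = 1 - t) by (unfold ak, Rmax; fold t; destruct (Rle_dec (1/2) (1-t)); lra).
      assert (Hdt := Hd t ltac:(lra)). rewrite <- Ek in Hdt.
      assert (v (1 - 2 * t) <= v (ak n (S k))).
      { assert (1 - 2 * t <= ak n (S k)) by (unfold ak; rewrite E1; apply Rmax_r).
        destruct (Req_dec (1 - 2*t) (ak n (S k))) as [<-|]; [lra|].
        left; apply H2; lra. }
      nra.
    - assert (Ek : ak n k = 1/2) by (unfold ak, Rmax; fold t; destruct (Rle_dec (1/2) (1-t)); lra).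
      clearbody t. assert (E2 : ak n (S k) = ak n k) by lra. rewrite E2. nra. }
  unfold hh. rewrite <- (Rmult_1_l (/ v (ak n (S k)))).
  apply (Rmult_le_reg_l (v (ak n k) * v (ak n (S k)))). nra.
  field_simplify; try lra.
Qed.

Lemma hh_ak v D n k : standing v -> doubling v D -> 1 <= D -> (1 <= n)%nat ->
  hh v (ak n k) <= D ^ k * hh v (ak n 0).
Proof.
  intros Hs Hd HD Hn. induction k as [|k IH].
  - simpl. lra.
  - pose proof (hh_ak_step v D n k Hs Hd HD Hn). simpl pow.
    assert (0 <= D) by lra. nra.
Qed.

Lemma block_bound v D n m K : standing v -> doubling v D -> 1 <= D -> (1 <= n)%nat ->
  (1 <= m)%nat -> 2 * D <= INR m ->
  ak n K ^ n * (hh v (ak n (S K)) - hh v (ak n K)) <= D * INR m ^ m * (1/2) ^ K * hh v (ak n 0).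
Proof.
  intros Hs Hd HD Hn Hm HmD.
  pose proof (ak_range n K Hn) as R1. pose proof (ak_range n (S K) Hn) as R2.
  pose proof (ak_dec n K) as Hdec. pose proof (ak_range n 0 Hn) as R0.
  assert (h0 : 0 < hh v (ak n 0)) by (apply hh_pos; auto; lra).
  assert (Hmp : 0 < INR m) by (apply lt_0_INR; lia).
  assert (Hrhs : 0 <= D * INR m ^ m * (1/2) ^ K * hh v (ak n 0)).
  { apply Rmult_le_pos; [|lra]. apply Rmult_le_pos; [|apply pow_le; lra].
    apply Rmult_le_pos; [lra|apply pow_le; lra]. }
  assert (Hnp : 0 < INR n) by (apply lt_0_INR; lia).
  assert (Ht : 0 < 2 ^ K / INR n) by (apply Rdiv_lt_0_compat; [apply pow_lt; lra | lra]).
  destruct (Rle_dec (1/2) (1 - 2 ^ K / INR n)) as [Hc|Hc].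
  - assert (Ek : ak n K = 1 - 2 ^ K / INR n) by (unfold ak, Rmax; destruct (Rle_dec (1/2) (1 - 2 ^ K / INR n)); lra).
    set (E := exp (- 2 ^ K)).
    assert (HA : ak n K ^ n <= E).
    { rewrite Ek. unfold E.
      replace (- 2 ^ K) with (- (2 ^ K / INR n) * INR n) by (field; lra).
      rewrite <- exp_pow_n. apply pow_incr. split; [lra|].
      pose proof (exp_ineq1_le (- (2 ^ K / INR n))). lra. }
    assert (HE : 0 < E) by apply exp_pos.
    assert (HB : E * (2 ^ K * D ^ K) <= INR m ^ m).
    { pose proof (exp_lower (2 ^ K) m ltac:(left; apply pow_lt; lra) ltac:(lia)) as Hx.
      assert (HE' : E * exp (2 ^ K) = 1).
      { unfold E. rewrite <- exp_plus. replace (- 2 ^ K + 2 ^ K) with 0 by ring. apply exp_0. }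
      unfold Rdiv in Hx; rewrite Rpow_mult_distr in Hx.
      replace (2 ^ K * D ^ K) with ((2 * D) ^ K) by (rewrite Rpow_mult_distr; ring).
      assert (Hpw : (2 * D) ^ K <= (2 ^ K) ^ m * (/ INR m) ^ m * INR m ^ m).
      { rewrite Rmult_assoc, <- Rpow_mult_distr.
        replace (/ INR m * INR m) with 1 by (field; lra). rewrite pow1, Rmult_1_r.
        rewrite <- pow_mult, Nat.mul_comm, pow_mult. apply pow_incr. split; [lra|].
        pose proof (INR_le_pow2 m). lra. }
      assert (0 <= INR m ^ m) by (apply pow_le; lra).
      assert (0 <= (2 * D) ^ K) by (apply pow_le; lra).
      assert (0 <= (2 ^ K) ^ m * (/ INR m) ^ m) by (apply Rmult_le_pos; apply pow_le; [left; apply pow_lt; lra | left; apply Rinv_0_lt_compat; lra]).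
      assert (Q : (2 * D) ^ K <= exp (2 ^ K) * INR m ^ m).
      { eapply Rle_trans; [exact Hpw|]. apply Rmult_le_compat_r; lra. }
      apply (Rmult_le_compat_l E) in Q; [|lra].
      replace (E * (exp (2 ^ K) * INR m ^ m)) with ((E * exp (2 ^ K)) * INR m ^ m) in Q by ring.
      rewrite HE' in Q. lra. }
    assert (HC1 : hh v (ak n (S K)) <= D ^ S K * hh v (ak n 0)) by (apply hh_ak; auto).
    assert (HC2 : 0 <= hh v (ak n K)) by (left; apply hh_pos; auto; lra).
    assert (HC3 : hh v (ak n K) <= hh v (ak n (S K))) by (apply hh_dec; auto; lra).
    assert (0 <= ak n K ^ n) by (apply pow_le; lra).
    assert (Hhalf : (1/2) ^ K * 2 ^ K = 1) by (rewrite <- Rpow_mult_distr; replace (1/2*2) with 1 by field; apply pow1).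
    simpl pow in HC1.
    assert (0 <= D ^ K) by (apply pow_le; lra).
    assert (L1 : ak n K ^ n * (hh v (ak n (S K)) - hh v (ak n K)) <= E * (D * D ^ K * hh v (ak n 0))).
    { apply Rle_trans with (E * (hh v (ak n (S K)) - hh v (ak n K))).
      apply Rmult_le_compat_r; lra. apply Rmult_le_compat_l; lra. }
    assert (L2 : E * (D * D ^ K * hh v (ak n 0)) = (E * (2 ^ K * D ^ K)) * ((1/2)^K * D * hh v (ak n 0))).
    { transitivity (E * (D * D ^ K * hh v (ak n 0)) * ((1/2)^K * 2^K)); [rewrite Hhalf; ring| ring]. }
    assert (0 <= (1/2)^K * D * hh v (ak n 0)).
    { apply Rmult_le_pos; [|lra]. apply Rmult_le_pos; [apply pow_le; lra|lra]. }
    nra.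
  - assert (Ek : ak n K = 1/2) by (unfold ak, Rmax; destruct (Rle_dec (1/2) (1 - 2 ^ K / INR n)); lra).
    assert (E2 : ak n (S K) = ak n K) by lra. rewrite E2. lra.
Qed.

Lemma Phi_half v D n m K : standing v -> doubling v D -> 1 <= D -> (1 <= n)%nat ->
  (1 <= m)%nat -> 2 * D <= INR m ->
  Phi v n K (1/2) <= hh v (ak n 0) * (1 + 2 * D * INR m ^ m * (1 - (1/2) ^ K)).
Proof.
  intros Hs Hd HD Hn Hm HmD. induction K as [|K IH].
  - simpl. rewrite Rmax_right by (pose proof (ak_range n 0 Hn); lra). lra.
  - simpl Phi. pose proof (ak_range n K Hn). pose proof (ak_range n (S K) Hn). pose proof (ak_dec n K).
    assert (Ec : clamp (ak n (S K)) (ak n K) (1/2) = ak n (S K)).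
    { unfold clamp. rewrite Rmax_right by lra. rewrite Rmin_left by lra. reflexivity. }
    rewrite Ec. pose proof (block_bound v D n m K Hs Hd HD Hn Hm HmD).
    replace ((1/2) ^ S K) with ((1/2) * (1/2)^K) by (simpl; ring).
    nra.
Qed.

Lemma ak_nn n : (1 <= n)%nat -> ak n n = 1/2.
Proof.
  intros Hn. unfold ak. assert (0 < INR n) by (apply lt_0_INR; lia).
  pose proof (INR_le_pow2 n).
  assert (1 <= 2 ^ n / INR n).
  { apply (Rmult_le_reg_r (INR n)); auto. unfold Rdiv. rewrite Rmult_assoc, Rinv_l by lra. lra. }
  apply Rmax_left. lra.
Qed.

Lemma term_bound v D n a b c : standing v -> doubling v D -> 1 <= D -> (1 <= n)%nat ->
  1/2 <= a -> a < b -> b <= c -> c < 1 -> b - a < 1 - c ->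
  cn_integrand v n a * (v b - v a) <= D * (Phi v n n a - Phi v n n b).
Proof.
  intros Hs Hd HD Hn Ha Hab Hbc Hc Hmesh.
  pose proof (Phi_claim v n n Hs Hn a b ltac:(lra) ltac:(lra)) as Hcl.
  rewrite ak_nn in Hcl by auto. rewrite !Rmax_left in Hcl by lra.
  destruct Hs as [H1 [H2 _]].
  assert (va : 1 <= v a) by (apply H1; lra).
  assert (vb : 1 <= v b) by (apply H1; lra).
  assert (vab : v a < v b) by (apply H2; lra).
  assert (Hdb : v b <= D * v a).
  { pose proof (Hd (1 - b) ltac:(lra)) as Hx.
    replace (1 - (1 - b)) with b in Hx by ring.
    replace (1 - 2 * (1 - b)) with (2 * b - 1) in Hx by ring.
    assert (v (2 * b - 1) <= v a).
    { destruct (Req_dec (2 * b - 1) a) as [->|]; [lra|]. left; apply H2; lra. }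
    nra. }
  assert (Pn : 0 <= a ^ n * (v b - v a)) by (apply Rmult_le_pos; [apply pow_le; lra | lra]).
  assert (Key : cn_integrand v n a * (v b - v a) <= D * (a ^ n * (hh v a - hh v b))).
  { unfold cn_integrand, hh.
    replace (a ^ n / v a ^ 2 * (v b - v a)) with (a ^ n * (v b - v a) * / (v a ^ 2)) by (field; lra).
    replace (D * (a ^ n * (/ v a - / v b))) with (a ^ n * (v b - v a) * (D / (v a * v b))) by (field; lra).
    apply Rmult_le_compat_l; auto.
    assert (0 < v a ^ 2 * v b) by (apply Rmult_lt_0_compat; [apply pow_lt|]; lra).
    apply (Rmult_le_reg_r (v a ^ 2 * v b)); auto.
    replace (/ v a ^ 2 * (v a ^ 2 * v b)) with (v b) by (field; lra).
    replace (D / (v a * v b) * (v a ^ 2 * v b)) with (D * v a) by (field; lra). lra. }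
  nra.
Qed.

Lemma sum_bound v D n c N s : standing v -> doubling v D -> 1 <= D -> (1 <= n)%nat ->
  0 < s -> s < 1 - c -> c < 1 -> 1/2 + INR N * s = c ->
  forall j, (j <= N)%nat ->
  RS_sum (cn_integrand v n) v (fun i => 1/2 + INR i * s) (fun i => 1/2 + INR i * s) j
    <= D * (Phi v n n (1/2) - Phi v n n (1/2 + INR j * s)).
Proof.
  intros Hs Hd HD Hn Hs0 Hsc Hc HN j. induction j as [|j IH]; intros Hj.
  - simpl. replace (1/2 + 0 * s) with (1/2) by ring. lra.
  - cbn [RS_sum]. assert (IH' := IH ltac:(lia)).
    assert (Hle : INR (S j) <= INR N) by (apply le_INR; lia).
    assert (0 <= INR j) by apply pos_INR.
    rewrite S_INR in *.
    pose proof (term_bound v D n (1/2 + INR j * s) (1/2 + (INR j + 1) * s) c Hs Hd HD Hn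
      ltac:(nra) ltac:(nra) ltac:(nra) Hc ltac:(nra)).
    lra.
Qed.

Theorem mainTheorem10 :
  forall D : R, 1 <= D ->
  exists (C : R) (n0 : nat),
    forall v : R -> R, standing v -> doubling v D ->
    forall (n : nat), (1 <= n)%nat -> (n0 <= n)%nat ->
    forall cn : R, RS_improper (cn_integrand v n) v (1/2) 1 cn ->
    cn <= C / gfun v (INR n).
Proof.
  intros D HD.
  destruct (INR_archimed 1 (2 * D) ltac:(lra)) as [m Hm].
  rewrite Rmult_1_r in Hm.
  assert (Hm1 : (1 <= m)%nat).
  { destruct m; [simpl in Hm; lra | lia]. }
  exists (D * (1 + 2 * D * INR m ^ m)), 2%nat.
  intros v Hs Hd n Hn1 Hn2 cn [Hex Hlim].
  assert (Hnp : 2 <= INR n) by (replace 2 with (INR 2) by (simpl; ring); apply le_INR; lia).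
  assert (Ea : ak n 0 = 1 - / INR n).
  { unfold ak. simpl pow. rewrite Rmax_right. field. lra.
    assert (/ INR n <= 1/2). { apply (Rmult_le_reg_r (INR n)); [lra|]. rewrite Rinv_l by lra. lra. }
    unfold Rdiv. lra. }
  set (h0 := hh v (ak n 0)).
  assert (Eg : / gfun v (INR n) = h0) by (unfold h0, hh, gfun; rewrite Ea; reflexivity).
  unfold Rdiv. rewrite Eg.
  set (C := D * (1 + 2 * D * INR m ^ m)).
  pose proof (ak_range n 0 Hn1) as R0.
  assert (Hh0 : 0 < h0) by (apply hh_pos; auto; lra).
  apply Rnot_lt_le. intros Hlt.
  set (eps := (cn - C * h0) / 3).
  assert (Heps : 0 < eps) by (unfold eps; lra).
  destruct (Hlim eps Heps) as [eta [Heta Hlim']].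
  set (c := Rmax (3/4) (1 - eta / 2)).
  assert (Hc1 : 3/4 <= c) by apply Rmax_l.
  assert (Hc2 : 1 - eta/2 <= c) by apply Rmax_r.
  assert (Hc3 : c < 1) by (unfold c, Rmax; destruct (Rle_dec (3/4) (1 - eta/2)); lra).
  destruct (Hex c ltac:(lra)) as [I HI].
  assert (HIc : Rabs (I - cn) < eps) by (apply (Hlim' c I); auto; lra).
  destruct (HI eps Heps) as [delta [Hdelta HRS]].
  set (d' := Rmin delta (1 - c)).
  assert (Hd'1 : d' <= delta) by apply Rmin_l.
  assert (Hd'2 : d' <= 1 - c) by apply Rmin_r.
  assert (Hd'3 : 0 < d') by (unfold d', Rmin; destruct (Rle_dec delta (1 - c)); lra).
  destruct (INR_archimed d' (c - 1/2) Hd'3) as [N HN].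
  assert (HNp : 0 < INR N) by nra.
  set (s := (c - 1/2) / INR N).
  assert (Hs0 : 0 < s) by (unfold s; apply Rdiv_lt_0_compat; lra).
  assert (Hsd : s < d').
  { unfold s. apply (Rmult_lt_reg_r (INR N)); auto. unfold Rdiv.
    rewrite Rmult_assoc, Rinv_l by lra. lra. }
  assert (HNs : 1/2 + INR N * s = c) by (unfold s; field; lra).
  assert (HR := HRS (fun i => 1/2 + INR i * s) (fun i => 1/2 + INR i * s) N).
  assert (Hsum := sum_bound v D n c N s Hs Hd HD Hn1 Hs0 ltac:(lra) Hc3 HNs N (le_n N)).
  rewrite HNs in Hsum.
  assert (HP1 := Phi_half v D n m n Hs Hd HD Hn1 Hm1 ltac:(lra)).
  assert (HP2 := Phi_nonneg v n n Hs Hn1 c ltac:(lra)).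
  assert (Hhalf : 0 < (1/2) ^ n) by (apply pow_lt; lra).
  assert (Hmm : 0 <= INR m ^ m) by (apply pow_le; apply pos_INR).
  assert (Hsum2 : RS_sum (cn_integrand v n) v (fun i => 1/2 + INR i * s) (fun i => 1/2 + INR i * s) N <= C * h0).
  { unfold C. fold h0 in HP1.
    assert (Phi v n n (1/2) <= h0 * (1 + 2 * D * INR m ^ m)).
    { eapply Rle_trans; [exact HP1|]. apply Rmult_le_compat_l; [lra|].
      assert (0 <= 2 * D * INR m ^ m) by (apply Rmult_le_pos; lra).
      nra. }
    nra. }
  assert (HR' : Rabs (RS_sum (cn_integrand v n) v (fun i => 1/2 + INR i * s) (fun i => 1/2 + INR i * s) N - I) < eps).
  { apply HR.
    - simpl. ring.
    - exact HNs.
    - intros i Hi. rewrite S_INR. repeat split; nra. }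
  apply Rabs_def2 in HR'. apply Rabs_def2 in HIc.
  unfold eps in *. lra.
Qed.
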